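(* For every positive integer $l$ there exists a graph of order $2l$ and size $(l+2)(l+1)/2-2$ that admits a regular distance $l$-labeling of degree $2$.
   Context: All graphs are finite and simple; $d(u,v)$ denotes the usual graph distance; order means number of vertices and size means number of edges. For integers $m\le n$, $[m,n]=\{m,m+1,\ldots,n\}$. For a graph $G$ and a positive integer $l$, a distance $l$-labeling of $G$ is a function $f:V(G)\to[0,l]$ such that (i) $f(V(G))=[0,l]$ or $f(V(G))=[1,l]$, and (ii) whenever two distinct vertices $u,v$ satisfy $f(u)=f(v)=k$, we have $d(u,v)=k$. A distance $l$-labeling is regular of degree $r$ if for every $k\in[1,l]$ there are exactly $r$ vertices labeled $k$. *)

(* Defs.v *)
From mathcomp Require Import all_boot.
Set Implicit Arguments. Unset Strict Implicit. Unset Printing Implicit Defensive.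

Definition simple_graph (T : finType) (e : rel T) : Prop :=
  symmetric e /\ irreflexive e.

Definition graph_size (n : nat) (e : rel 'I_n) : nat :=
  #|[set p : 'I_n * 'I_n | e p.1 p.2 && (p.1 < p.2)]|.

Definition walk_len (T : finType) (e : rel T) (u v : T) (k : nat) : Prop :=
  exists p : seq T, [/\ size p = k, path e u p & last u p = v].

Definition dist_is (T : finType) (e : rel T) (u v : T) (k : nat) : Prop :=
  walk_len e u v k /\ (forall j, j < k -> ~ walk_len e u v j).

Definition distance_labeling (T : finType) (e : rel T) (l : nat) (f : T -> nat) : Prop :=
  ((forall k, (exists x, f x = k) <-> k <= l) \/
   (forall k, (exists x, f x = k) <-> 1 <= k <= l)) /\
  (forall u v, u != v -> f u = f v -> dist_is e u v (f u)).

Definition regular_distance_labeling (T : finType) (e : rel T) (l r : nat)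
    (f : T -> nat) : Prop :=
  distance_labeling e l f /\
  (forall k, 1 <= k <= l -> #|[set x | f x == k]| = r).

(* Main.v *)
Require Import Defs.
From mathcomp Require Import all_boot.
From mathcomp Require Import zify.

Definition gE (l a b : nat) : bool := (b <= l) || ((b == a.+1) && (l <= a)).
Definition eN (l i j : nat) : bool :=
  (i != j) && (((i < j) && gE l i j) || ((j < i) && gE l j i)).

Lemma walk_sym (T : finType) (e : rel T) (u v : T) k :
  symmetric e -> walk_len e u v k -> walk_len e v u k.
Proof.
move=> se [p [hs hp hl]].
exists (rev (belast u p)); split.
- by rewrite size_rev size_belast.
- rewrite -hl rev_path; apply: sub_path hp => x y; by rewrite se.
- rewrite -hl; case: p {hs hp hl} => [|y q] //=.
  by rewrite rev_cons last_rcons.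
Qed.

Lemma lip_path (T : finType) (e : rel T) (h : T -> nat) (u : T) (p : seq T) :
  (forall x y, e x y -> h y <= (h x).+1 /\ h x <= (h y).+1) ->
  path e u p -> h (last u p) <= h u + size p /\ h u <= h (last u p) + size p.
Proof.
move=> H; elim: p u => [|y q IH] u /=; first by rewrite addn0.
move=> /andP[euy /IH [h1 h2]]; have [h3 h4] := H _ _ euy; lia.
Qed.

Lemma sumL1 a b n :
  \sum_(0 <= j < n) ((a < j) && (j <= b) : nat) = minn b.+1 n - a.+1.
Proof.
elim: n => [|n IH]; first by rewrite big_geq.
rewrite big_nat_recr //= IH.
case: (ltnP a n) => h1; case: (leqP n b) => h2 /=; lia.
Qed.

Lemma sumL2 c n : \sum_(0 <= j < n) ((j == c) : nat) = (c < n).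
Proof.
elim: n => [|n IH]; first by rewrite big_geq.
rewrite big_nat_recr //= IH.
case: (ltngtP c n) => h /=; try lia; subst; by rewrite ltnn eqxx.
Qed.

Section S.
Variable l : nat.
Hypothesis hl : 0 < l.

Definition H (i : nat) : nat := if i < l then l - i else (i.+1 < 2 * l).

Lemma inner (i : nat) :
  \sum_(0 <= j < 2 * l) ((eN l i j && (i < j)) : nat) = H i.
Proof.
have E : forall j, (eN l i j && (i < j)) = (i < j) && gE l i j.
  move=> j; rewrite /eN; case: (ltngtP i j) => h /=.
  - by rewrite ?andbT ?orbF.
  - by rewrite ?andbF.
  - by [].
rewrite /H; under eq_bigr => j _ do rewrite E.
case: (ltnP i l) => hi.
- have E2 : forall j, (i < j) && gE l i j = (i < j) && (j <= l).
    by move=> j; rewrite /gE (leqNgt l i) hi andbF orbF.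
  under eq_bigr => j _ do rewrite E2.
  rewrite sumL1; lia.
- have E2 : forall j, (i < j) && gE l i j = (j == i.+1).
    move=> j; rewrite /gE; apply/andP/eqP.
    + by move=> [h1 /orP[h2|/andP[/eqP h2 _]]] //; lia.
    + move=> ->; split => //; apply/orP; right; by rewrite eqxx hi.
  under eq_bigr => j _ do rewrite E2.
  by rewrite sumL2.
Qed.

Lemma outerA m : m <= l -> 2 * \sum_(0 <= i < m) H i = m * (2 * l - m + 1).
Proof.
elim: m => [|m IH] hm; first by rewrite big_geq.
rewrite big_nat_recr //= mulnDr IH; last lia.
rewrite /H (_ : m < l = true); last by apply/idP.
nia.
Qed.

Lemma outerB d : d <= l ->
  \sum_(0 <= i < l + d) H i = \sum_(0 <= i < l) H i + minn d (l - 1).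
Proof.
elim: d => [|d IH] hd; first by rewrite addn0 min0n addn0.
rewrite addnS big_nat_recr //= IH; last lia.
rewrite /H ltnNge leq_addr /=.
case: (ltnP (l + d).+1 (2 * l)) => h /=; lia.
Qed.

Lemma total : \sum_(0 <= i < 2 * l) H i = (l + 2) * (l + 1) %/ 2 - 2.
Proof.
have hA := @outerA l (leqnn l).
have hB := @outerB l (leqnn l).
rewrite (_ : 2 * l = l + l); last lia.
rewrite hB.
set S := \sum_(0 <= i < l) H i in hA *.
have -> : (l + 2) * (l + 1) = 2 * (S + l + 1).
  rewrite !mulnDr hA; nia.
rewrite mulKn //; lia.
Qed.

End S.

Theorem mainTheorem6 (l : nat) (hl : 0 < l) :
  exists e : rel 'I_(2 * l),
    [/\ simple_graph e,
        graph_size e = (l + 2) * (l + 1) %/ 2 - 2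
      & exists f : 'I_(2 * l) -> nat, regular_distance_labeling e l 2 f].
Proof.
pose e := [rel i j : 'I_(2 * l) | eN l i j].
have hlip : forall x y : 'I_(2 * l), e x y ->
    (y.+1 - l) <= (x.+1 - l).+1 /\ (x.+1 - l) <= (y.+1 - l).+1.
  move=> x y; rewrite /= /eN => /andP[_ /orP[/andP[lt g]|/andP[lt g]]];
    move: g; rewrite /gE => /orP[g|/andP[/eqP g g']]; lia.
have hsym : symmetric e by move=> i j; rewrite /= /eN eq_sym orbC.
have hwalk : forall j, j < l -> forall a b : 'I_(2 * l), a < l -> nat_of_ord b = l + j ->
    walk_len e a b j.+1.
  elim => [|j IH] hj a b ha hb.
  - exists [:: b]; split => //=; rewrite andbT /eN /gE.
    have -> : (a != b) by rewrite -val_eqE /= hb; apply/eqP; lia.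
    rewrite hb addn0 ha leqnn /=. done.
  - have hb' : l + j < 2 * l by lia.
    have [p [hs hp hla]] := IH (ltnW hj) a (Ordinal hb') ha erefl.
    exists (rcons p b); split.
    + by rewrite size_rcons hs.
    + rewrite rcons_path hp hla /= /eN /gE.
      have -> : (Ordinal hb' != b) by rewrite -val_eqE /= hb; apply/eqP; lia.
      rewrite hb /= (_ : l + j < l + j.+1 = true); last by apply/idP; lia.
      rewrite addnS eqxx leq_addr orbT /= //.
    + by rewrite last_rcons.
have hdist : forall a b : 'I_(2 * l), a < l -> nat_of_ord b = l + a -> dist_is e a b a.+1.
  move=> a b ha hb; split; first exact: hwalk.
  move=> j hj [p [hs hp hla]].
  have [h1 _] := @lip_path _ e (fun x : 'I_(2 * l) => x.+1 - l) a p hlip hp.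
  move: h1; rewrite hla hs hb; lia.
have hdsym : forall (a b : 'I_(2 * l)) k, dist_is e a b k -> dist_is e b a k.
  move=> a b k [w nw]; split; first exact: walk_sym.
  move=> j hj /(@walk_sym _ _ _ _ _ hsym); exact: nw.
exists e; split.
- split => //; move=> i; by rewrite /= /eN eqxx.
- rewrite /graph_size -sum1_card big_mkcond /=.
  under eq_bigr => p _ do rewrite inE.
  rewrite -(pair_bigA _ (fun i j : 'I_(2 * l) => if eN l i j && (i < j) then 1 else 0)) /=.
  rewrite -(total l) // big_mkord; apply: eq_bigr => i _.
  rewrite -(inner l hl i) big_mkord; apply: eq_bigr => j _.
  by case: ifP.
- exists (fun i : 'I_(2 * l) => if i < l then i.+1 else i.+1 - l).
  split; first split.
  + right => k; split.
    * move=> [x <-]; have := ltn_ord x; case: ifP => /=; lia.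
    * move=> hk; have hk' : k.-1 < 2 * l by lia.
      exists (Ordinal hk') => /=; rewrite (_ : k.-1 < l = true); last by apply/idP; lia.
      lia.
  + move=> u v huv0.
    have huv : nat_of_ord u <> nat_of_ord v.
      by move=> h; move/eqP: huv0; apply; apply: val_inj.
    have := ltn_ord u; have := ltn_ord v.
    case: (ltnP u l) => hu; case: (ltnP v l) => hv hv2 hu2 heq.
    * exfalso; lia.
    * apply: hdist => //. lia.
    * apply: hdsym; rewrite heq; apply: hdist => //; lia.
    * exfalso; lia.
  + move=> k hk.
    have ha : k.-1 < 2 * l by lia.
    have hb : l + k.-1 < 2 * l by lia.
    have -> : [set x : 'I_(2 * l) | (if x < l then x.+1 else x.+1 - l) == k]
            = [set Ordinal ha; Ordinal hb].
      apply/setP => x; rewrite !inE -!val_eqE /=.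
      have := ltn_ord x.
      case: (ltnP x l) => hx hx2; apply/eqP/orP.
      - move=> H; left; apply/eqP; lia.
      - move=> [/eqP H|/eqP H]; lia.
      - move=> H; right; apply/eqP; lia.
      - move=> [/eqP H|/eqP H]; lia.
    rewrite cards2; case: eqP => // /(congr1 val) /=; lia.
Qed.
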